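(* Let $t$ be a rooted tree with vertex set $I$ and $t'$ a rooted tree with vertex set $I'$. The intervals $[\widehat{0},t]$ in $\Pi_{\operatorname{NAP}}(I)$ and $[\widehat{0},t']$ in $\Pi_{\operatorname{NAP}}(I')$ are isomorphic posets if and only if $t$ and $t'$ have the same underlying unlabeled rooted tree (i.e. are isomorphic as rooted trees). Consequently the coinvariants of $\operatorname{NAP}$ are in bijection with the isomorphism classes of the posets $[\widehat{0},t]$, $t$ a rooted tree.
   Context: $\operatorname{NAP}(I)$ is the set of rooted trees with vertex set $I$; its coinvariants $\operatorname{NAP}(n)_{\mathfrak{S}_n}$ are the unlabeled rooted trees with $n$ vertices. $\Pi_{\operatorname{NAP}}(I)$ is the set of forests of rooted trees whose vertex set is exactly $I$, partially ordered as follows: $y$ covers $x$ iff $y$ is obtained from $x$ by adding an edge from the root of one component of $x$ to the root of another component (the latter root remaining the root); $\leq$ is the reflexive–transitive closure. $\widehat{0}$ is the forest of one-vertex trees. *)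

(* Defs.v *)
From Stdlib Require Import Relations.
From mathcomp Require Import all_boot.
Set Implicit Arguments. Unset Strict Implicit. Unset Printing Implicit Defensive.

(* A forest of rooted trees on the finite vertex set I is encoded by its
   parent function: p v = Some w means w is the parent of v, p v = None
   means v is a root.  Acyclicity: iterating the parent map from any vertex
   eventually reaches "None" (i.e. passes through a root). *)
Definition pfun (I : finType) := {ffun I -> option I}.

Definition is_forest (I : finType) (p : pfun I) : Prop :=
  forall v : I, exists k : nat, iter k (obind p) (Some v) = None.

Definition roots (I : finType) (p : pfun I) : {set I} := [set v | p v == None].

Definition is_rooted_tree (I : finType) (p : pfun I) : Prop :=
  is_forest p /\ #|roots p| = 1.

Definition hat0 (I : finType) : pfun I := [ffun _ => None].

Definition nap_cover (I : finType) (x y : pfun I) : Prop :=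
  is_forest x /\
  exists a b : I, [/\ a != b, x a = None, x b = None &
    y = [ffun v => if v == a then Some b else x v]].

Definition nap_le (I : finType) : relation (pfun I) :=
  clos_refl_trans (pfun I) (@nap_cover I).

Definition in_interval (I : finType) (t x : pfun I) : Prop :=
  is_forest x /\ nap_le (hat0 I) x /\ nap_le x t.

Definition interval_iso (I I' : finType) (t : pfun I) (t' : pfun I') : Prop :=
  exists (f : pfun I -> pfun I') (g : pfun I' -> pfun I),
    [/\ (forall x, in_interval t x -> in_interval t' (f x) /\ g (f x) = x),
        (forall y, in_interval t' y -> in_interval t (g y) /\ f (g y) = y) &
        (forall x y, in_interval t x -> in_interval t y ->
           (nap_le x y <-> nap_le (f x) (f y)))].

Definition rooted_tree_iso (I I' : finType) (t : pfun I) (t' : pfun I') : Prop :=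
  exists s : I -> I', bijective s /\ forall v : I, t' (s v) = omap s (t v).

(* Main.v *)
Require Import Defs.
From Stdlib Require Import Relations ClassicalEpsilon.
From mathcomp Require Import all_boot.
Set Implicit Arguments. Unset Strict Implicit. Unset Printing Implicit Defensive.

Definition anc (I : finType) (t : pfun I) (u v : I) : Prop :=
  exists k, iter k (obind t) (Some u) = Some v.

Lemma iter_None (I : finType) (t : pfun I) k : iter k (obind t) None = None.
Proof. by elim: k => //= k ->. Qed.

Lemma iter_add (I : finType) (t : pfun I) a b o :
  iter (a + b) (obind t) o = iter a (obind t) (iter b (obind t) o).
Proof. by rewrite iterD. Qed.

Lemma anc_refl (I : finType) (t : pfun I) u : anc t u u.
Proof. by exists 0. Qed.

Lemma anc_trans (I : finType) (t : pfun I) u v w : anc t u v -> anc t v w -> anc t u w.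
Proof. by move=> [a Ha] [b Hb]; exists (b + a); rewrite iter_add Ha. Qed.

Lemma anc_step (I : finType) (t : pfun I) u w : t u = Some w -> anc t u w.
Proof. by move=> H; exists 1. Qed.

Lemma anc_parent (I : finType) (t : pfun I) u v : anc t u v -> u <> v ->
  exists w, t u = Some w /\ anc t w v.
Proof.
move=> [[|k] Hk] Huv; first by case: Hk.
move: Hk; rewrite iterSr /=; case E: (t u) => [w|]; last by rewrite iter_None.
by move=> Hk; exists w; split => //; exists k.
Qed.

Lemma anc_root (I : finType) (t : pfun I) w u : t w = None -> anc t w u -> u = w.
Proof.
move=> Hw [[|k] Hk]; first by case: Hk.
by move: Hk; rewrite iterSr /= Hw iter_None.
Qed.

Lemma iter_None_ge (I : finType) (t : pfun I) o k m : k <= m ->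
  iter k (obind t) o = None -> iter m (obind t) o = None.
Proof. move=> /subnK <- H; by rewrite iter_add H iter_None. Qed.

Lemma anc_antisym (I : finType) (t : pfun I) u v : is_forest t ->
  anc t u v -> anc t v u -> u = v.
Proof.
move=> Ht [a Ha] [b Hb].
case: (ltnP 0 (b + a)) => Hp; last first.
  by move: Hp; rewrite leqn0 addn_eq0 => /andP[/eqP Hb0 /eqP Ha0]; move: Ha; rewrite Ha0 => -[].
have Hc : forall n, iter (n * (b + a)) (obind t) (Some u) = Some u.
  elim=> [|n IH] //; by rewrite mulSn iter_add IH iter_add Ha Hb.
case: (Ht u) => k Hk.
have : iter (k * (b + a)) (obind t) (Some u) = None.
  apply: (iter_None_ge _ Hk); by rewrite leq_pmulr.
by rewrite Hc.
Qed.

Lemma no_loop (I : finType) (t : pfun I) u : is_forest t -> t u <> Some u.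
Proof.
move=> Ht H; case: (Ht u) => k; suff -> : iter k (obind t) (Some u) = Some u by [].
by elim: k => //= k ->; rewrite /= H.
Qed.


Definition subf (I : finType) (x y : pfun I) := forall v, x v = None \/ x v = y v.
Definition Pr (I : finType) (x y : pfun I) :=
  subf x y /\ forall v w, y v = Some w -> x v = None -> x w = None.

Lemma Pr_refl (I : finType) (x : pfun I) : Pr x x.
Proof. by split=> [v|v w ->]; [right|]. Qed.

Lemma Pr_trans (I : finType) (x y z : pfun I) : Pr x y -> Pr y z -> Pr x z.
Proof.
move=> [S1 H1] [S2 H2]; split.
  move=> v; case: (S1 v) => [->|E]; first by left.
  case: (S2 v) => E2; first by left; rewrite E.
  by right; rewrite E.
move=> v w Hz Hx.
case Ey: (y v) => [u|].
  case: (S2 v) => E2; first by rewrite E2 in Ey.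
  rewrite -E2 Ey in Hz; case: Hz => <-; exact: H1 Ey Hx.
have Hyw := H2 _ _ Hz Ey.
by case: (S1 w) => // ->.
Qed.

Lemma cover_Pr (I : finType) (x y : pfun I) : nap_cover x y -> Pr x y.
Proof.
move=> [_ [a [b [Hab Ha Hb ->]]]]; split.
  move=> v; rewrite ffunE; case: eqP => [->|_]; [by left|by right].
move=> v w; rewrite ffunE; case: eqP => [-> [<-] //|_ -> //].
Qed.

Lemma le_Pr (I : finType) (x y : pfun I) : nap_le x y -> Pr x y.
Proof.
elim=> [a b /cover_Pr //| a|a b c _ H1 _ H2]; first exact: Pr_refl.
exact: Pr_trans H1 H2.
Qed.

Lemma forest_sub (I : finType) (x t : pfun I) : subf x t -> is_forest t -> is_forest x.
Proof.
move=> S Ht v; case: (Ht v) => k Hk; exists k.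
have : iter k (obind x) (Some v) = None \/ iter k (obind x) (Some v) = iter k (obind t) (Some v).
  elim: k {Hk} => [|k [IH|IH]] /=; first by right.
    by left; rewrite IH.
  rewrite IH; case: (iter k (obind t) (Some v)) => [u|] /=; last by right.
  case: (S u) => ->; [by left|by right].
by case=> ->.
Qed.

Lemma hgt_ex (I : finType) (y : pfun I) (Hy : is_forest y) (v : I) :
  exists k, iter k (obind y) (Some v) == None.
Proof. by case: (Hy v) => k Hk; exists k; apply/eqP. Qed.

Definition hgt (I : finType) (y : pfun I) (Hy : is_forest y) (v : I) : nat :=
  ex_minn (hgt_ex Hy v).

Lemma hgt_spec (I : finType) (y : pfun I) (Hy : is_forest y) (a b : I) :
  y a = Some b -> hgt Hy b < hgt Hy a.
Proof.
move=> Hab; rewrite /hgt.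
case: ex_minnP => m Hm Hmin; case: ex_minnP => n Hn Hnmin.
case: n Hn Hnmin => [|n] Hn _; first by [].
rewrite iterSr /= Hab in Hn.
exact: Hmin.
Qed.

Lemma chain (I : finType) (n : nat) : forall (x y : pfun I),
  #|[set v | (x v == None) && (y v != None)]| = n -> is_forest y -> Pr x y -> nap_le x y.
Proof.
elim: n => [|n IH] x y Hc Hy [S H].
  have -> : x = y; last exact: rt_refl.
  apply/ffunP => v; case: (S v) => // Ev; rewrite Ev.
  move/eqP: Hc; rewrite cards_eq0 => /eqP/setP/(_ v); rewrite !inE Ev eqxx /=.
  by case: (y v).
set D := [set v | _] in Hc.
have [v0 Hv0] : exists v0, v0 \in D.
  by apply/set0Pn; rewrite -card_gt0 Hc.
case: (arg_maxnP (hgt Hy) Hv0) => v HvD Hmax.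
have HvD2 : v \in D := HvD.
move: (HvD2); rewrite /D inE => /andP[/eqP Hxv Hyv].
case Ew: (y v) Hyv => [w|] // _.
have Hxw : x w = None := H _ _ Ew Hxv.
have Hfx : is_forest x := forest_sub (fun u => match S u with
   | or_introl h => or_introl h | or_intror h => or_intror h end) Hy.
pose x' : pfun I := [ffun u => if u == v then Some w else x u].
apply: (@rt_trans _ _ _ x').
  apply: rt_step; split => //; exists v, w; split => //.
  by apply/eqP => Evw; move: Ew; rewrite Evw; apply: no_loop.
apply: (IH x' y) => //.
  have -> : [set u | (x' u == None) && (y u != None)] = D :\ v.
    by apply/setP => u; rewrite /D !inE ffunE; have [->|Huv] := eqVneq u v.
  by move: Hc; rewrite (cardsD1 v) /D inE Hxv Ew /= add1n => -[].
split.
  by move=> u; rewrite ffunE; case: eqP => [->|_]; [right|exact: S].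
move=> a b Hab; rewrite !ffunE; case: eqP => // Hav Hxa.
case: eqP => [Hbv|_]; last exact: H Hab Hxa.
have : a \in D by rewrite /D inE Hxa Hab.
move/Hmax => Hle; move: (hgt_spec Hy Hab); rewrite Hbv ltnNge.
by rewrite /= in Hle; rewrite Hle.
Qed.

Lemma Pr_le (I : finType) (x y : pfun I) : is_forest y -> Pr x y -> nap_le x y.
Proof. exact: chain. Qed.


Lemma interval_C (I : finType) (t x : pfun I) : is_forest t ->
  (in_interval t x <-> Pr x t).
Proof.
move=> Ht; split; first by case=> _ [_ /le_Pr].
move=> HP; have Hx : is_forest x by apply: forest_sub Ht; case: HP.
split => //; split; last exact: Pr_le.
apply: Pr_le => //; split => [v|v w _ _]; rewrite ffunE //; by left.
Qed.

Lemma le_C (I : finType) (t x y : pfun I) : is_forest t -> Pr x t -> Pr y t ->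
  (nap_le x y <-> forall v, y v = None -> x v = None).
Proof.
move=> Ht Hx Hy; split.
  by move/le_Pr => [S _] v Hv; case: (S v) => // ->.
move=> Hle; apply: Pr_le; first by apply: forest_sub Ht; case: Hy.
case: Hx => [Sx Hx]; case: Hy => [Sy Hy]; split.
  move=> v; case E: (y v) => [a|]; last by left; apply: Hle.
  case: (Sx v) => Ex; first by left.
  right; rewrite Ex; case: (Sy v) => E2; [by rewrite E2 in E | by rewrite -E2 E].
move=> v w Hyv Hxv; apply: Hx Hxv.
by case: (Sy v) => E; [rewrite E in Hyv | rewrite -E].
Qed.

Lemma ext_C (I : finType) (t x y : pfun I) : Pr x t -> Pr y t ->
  (forall v, x v = None <-> y v = None) -> x = y.
Proof.
move=> [Sx _] [Sy _] H; apply/ffunP => v.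
case Ex: (x v) => [a|].
  case Ey: (y v) => [b|]; last by move: (proj2 (H v) Ey); rewrite Ex.
  case: (Sx v) => E1; first by rewrite E1 in Ex.
  case: (Sy v) => E2; first by rewrite E2 in Ey.
  by rewrite -Ex -Ey E1 E2.
by symmetry; apply/H.
Qed.

Lemma clos_anc (I : finType) (t x : pfun I) u v : Pr x t -> x v <> None -> anc t u v -> x u <> None.
Proof.
move=> [S H] Hv [k Hk]; elim: k u Hk => [|k IH] u Hk; first by case: Hk => ->.
move: Hk; rewrite iterSr /=; case E: (t u) => [u'|]; last by rewrite iter_None.
move=> Hk Hu; apply: (IH u' Hk); exact: H E Hu.
Qed.

Lemma Pr_some (I : finType) (t x : pfun I) v : Pr x t -> x v <> None -> x v = t v.
Proof. by move=> [S _] H; case: (S v). Qed.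

Lemma Pr_root (I : finType) (t x : pfun I) v : Pr x t -> t v = None -> x v = None.
Proof. by move=> [S _] H; case: (S v) => // ->. Qed.

Definition dec (P : Prop) : bool := if excluded_middle_informative P then true else false.
Lemma decRP (P : Prop) : reflect P (dec P).
Proof. by rewrite /dec; case: excluded_middle_informative => H; constructor. Qed.

Definition Jf (I : finType) (t : pfun I) (v : I) : pfun I :=
  [ffun u => if dec (anc t u v) then t u else None].

Lemma Jf_C (I : finType) (t : pfun I) v : Pr (Jf t v) t.
Proof.
split=> [u|u w Hu]; rewrite !ffunE.
  by case: decRP; [right|left].
case: decRP => [_|Hn]; first by rewrite Hu.
case: decRP => // Ha; case: Hn; exact: anc_trans (anc_step Hu) Ha.
Qed.

Lemma Jf_le (I : finType) (t : pfun I) v u : is_forest t -> t v <> None ->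
  (nap_le (Jf t v) (Jf t u) <-> anc t v u).
Proof.
move=> Ht Hv; rewrite (le_C Ht (Jf_C t v) (Jf_C t u)); split.
  move=> H; case: (decRP (anc t v u)) => // Hn.
  have := H v; rewrite !ffunE (introF (decRP _) Hn) (introT (decRP _) (anc_refl t v)).
  by move=> /(_ erefl).
move=> Hvu w; rewrite !ffunE; case: decRP => // Hwu; case: decRP => // Hwv.
by case: Hwu; exact: anc_trans Hwv Hvu.
Qed.

Lemma Jf_inj (I : finType) (t : pfun I) v u : is_forest t -> t v <> None -> t u <> None ->
  Jf t v = Jf t u -> v = u.
Proof.
move=> Ht Hv Hu E; apply: anc_antisym => //.
  by apply/(Jf_le u Ht Hv); rewrite E; exact: rt_refl.
by apply/(Jf_le v Ht Hu); rewrite E; exact: rt_refl.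
Qed.


Definition JI (I : finType) (t x : pfun I) : Prop :=
  in_interval t x /\ exists m, [/\ in_interval t m, nap_le m x, m <> x &
    forall y, in_interval t y -> nap_le y x -> y <> x -> nap_le y m].

Lemma JI_Jf (I : finType) (t : pfun I) v : is_forest t -> t v <> None -> JI t (Jf t v).
Proof.
move=> Ht Hv; split; first exact/(interval_C _ Ht)/Jf_C.
pose m : pfun I := [ffun u => if dec (anc t u v) && (u != v) then t u else None].
have Hm : Pr m t.
  split=> [u|a b Hab]; rewrite !ffunE.
    by case: ifP; [right|left].
  case: (boolP (dec (anc t b v) && (b != v))) => //= /andP[/decRP Hbv _].
  have Hav : anc t a v := anc_trans (anc_step Hab) Hbv.
  case: (boolP (dec (anc t a v) && (a != v))) => [_|]; first by rewrite Hab.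
  rewrite (introT (decRP _) Hav) /= negbK => /eqP Eav _.
  rewrite Eav in Hab Hav.
  have Ebv : b = v by apply: anc_antisym => //; exact: anc_step.
  by case: (@no_loop _ t v Ht); rewrite -{2}Ebv.
exists m; split.
- exact/(interval_C _ Ht).
- apply/(le_C Ht Hm (Jf_C t v)) => u; rewrite !ffunE.
  by case: decRP => //= _ ->; case: (u != v).
- move=> E; have := congr1 (fun f : pfun I => f v) E; rewrite /= !ffunE eqxx andbF.
  by rewrite (introT (decRP _) (anc_refl t v)) => /esym.
move=> y /(interval_C _ Ht) Hy /(le_C Ht Hy (Jf_C t v)) Hyx Hne.
apply/(le_C Ht Hy Hm) => u; rewrite ffunE.
case: (boolP (dec (anc t u v))) => [/decRP Huv|/decRP Huv] /=; last first.
  by move=> _; apply: Hyx; rewrite ffunE (introF (decRP _) Huv).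
case: eqP => [Euv _|_ Htu]; last exact: Pr_root Hy Htu.
rewrite Euv; case Eyv: (y v) => [a|] //.
case: Hne; apply: (ext_C Hy (Jf_C t v)) => w; split; first last.
  exact: Hyx.
move=> Hw; rewrite ffunE; case: decRP => // Hwv.
have : y w <> None by apply: clos_anc Hy _ Hwv; rewrite Eyv.
by [].
Qed.

Definition rem_v (I : finType) (x : pfun I) v : pfun I := [ffun w => if w == v then None else x w].

Definition top (I : finType) (t x : pfun I) v := x v <> None /\ forall w, t v = Some w -> x w = None.

Lemma rem_Pr (I : finType) (t x : pfun I) v : Pr x t -> top t x v -> Pr (rem_v x v) t.
Proof.
move=> [S H] [_ Hv]; split=> [u|a b Hab]; rewrite !ffunE.
  by case: eqP => _; [left|exact: S].
case: (a =P v) => [Eav|Nav] Ha; case: (b =P v) => // Nbv.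
  by rewrite Eav in Hab; exact: Hv Hab.
exact: H Hab Ha.
Qed.

Lemma top_ex (I : finType) (t x : pfun I) n : forall u,
  iter n (obind t) (Some u) = None -> x u <> None -> exists v, top t x v /\ anc t u v.
Proof.
elim: n => [//|n IH] u; rewrite iterSr /=.
case E: (t u) => [u'|] Hn Hu; last first.
  exists u; split; last exact: anc_refl.
  by split => // w; rewrite E.
case Ex: (x u') => [a|].
  have [v [Hv Hav]] := IH u' Hn (ltac:(by rewrite Ex)).
  by exists v; split => //; exact: anc_trans (anc_step E) Hav.
exists u; split; last exact: anc_refl.
by split => // w; rewrite E => -[<-].
Qed.

Lemma JI_inv (I : finType) (t x : pfun I) : is_forest t -> JI t x ->
  exists v, t v <> None /\ x = Jf t v.
Proof.
move=> Ht [/(interval_C _ Ht) Hx [m [/(interval_C _ Ht) Hm /(le_C Ht Hm Hx) Hmx Hne H]]].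
have H' : forall y, Pr y t -> (forall u, x u = None -> y u = None) -> y <> x ->
    forall u, m u = None -> y u = None.
  move=> y Hy Hyx Hyne; apply/(le_C Ht Hy Hm); apply: H => //.
  - exact/(interval_C _ Ht).
  - exact/(le_C Ht Hy Hx).
have rem_lt : forall v, top t x v -> forall u, m u = None -> rem_v x v u = None.
  move=> v Tv u Hmu; apply: (H' _ (rem_Pr Hx Tv)) Hmu.
  - by move=> w; rewrite ffunE; case: eqP.
  - move=> E; case: Tv => Hxv _; apply: Hxv; by rewrite -E ffunE eqxx.
have uniq_top : forall v v', top t x v -> top t x v' -> v = v'.
  move=> v v' Tv Tv'; case: (v =P v') => // Hvv'; case: Hne.
  apply: (ext_C Hm Hx) => u; split; last exact: Hmx.
  move=> Hmu.
  have h1 := rem_lt v Tv u Hmu; have h2 := rem_lt v' Tv' u Hmu.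
  rewrite !ffunE in h1 h2.
  case: (u =P v) h1 => [Euv|Nuv] h1; last by move: h1; case: (u =P v).
  by move: h2; rewrite Euv; case: (v =P v').
have [u0 Hu0] : exists u0, x u0 <> None.
  case: (pickP (fun u => x u != None)) => [u0 /eqP Hu0 | Hn]; first by exists u0.
  case: Hne; apply: (ext_C Hm Hx) => u; split; last exact: Hmx.
  by move=> _; move: (Hn u) => /= /negbFE/eqP.
case: (Ht u0) => n0 Hn0.
have [v [Tv Hu0v]] := @top_ex _ t x n0 u0 Hn0 Hu0.
exists v; split.
  by case: Tv => Hxv _; rewrite -(Pr_some Hx Hxv).
apply: (ext_C Hx (Jf_C t v)) => u; rewrite ffunE; split.
  move=> Hxu; case: decRP => // Huv.
  by case: (clos_anc Hx (proj1 Tv) Huv).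
move=> H0; case Exu: (x u) => [a|] //; exfalso.
have Hxu : x u <> None by rewrite Exu.
case: (Ht u) => n Hn; have [v' [Tv' Huv']] := @top_ex _ t x n u Hn Hxu.
have Evv := uniq_top v v' Tv Tv'; rewrite -Evv in Huv'.
move: H0; rewrite (introT (decRP _) Huv') => H0.
by apply: Hxu; exact: Pr_root Hx H0.
Qed.


Lemma root_uniq (I : finType) (t : pfun I) a b : is_rooted_tree t -> t a = None -> t b = None -> a = b.
Proof.
move=> [_ /eqP/cards1P [r Hr]] Ha Hb.
have : a \in Defs.roots t by rewrite inE Ha.
have : b \in Defs.roots t by rewrite inE Hb.
by rewrite Hr !inE => /eqP -> /eqP ->.
Qed.

Lemma root_ex (I : finType) (t : pfun I) : is_rooted_tree t -> exists r, t r = None.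
Proof.
move=> [_ /eqP/cards1P [r Hr]]; exists r.
have : r \in Defs.roots t by rewrite Hr inE.
by rewrite inE => /eqP.
Qed.

Lemma JI_transport (I I' : finType) (t : pfun I) (t' : pfun I') f g :
  (forall x, in_interval t x -> in_interval t' (f x) /\ g (f x) = x) ->
  (forall y, in_interval t' y -> in_interval t (g y) /\ f (g y) = y) ->
  (forall x y, in_interval t x -> in_interval t y -> (nap_le x y <-> nap_le (f x) (f y))) ->
  forall x, JI t x -> JI t' (f x).
Proof.
move=> Hf Hg Hord x [Hx [m [Hm Hmx Hne H]]]; split; first exact: (Hf x Hx).1.
exists (f m); split.
- exact: (Hf m Hm).1.
- exact/(Hord m x Hm Hx).
- by move=> E; apply: Hne; rewrite -(Hf m Hm).2 -(Hf x Hx).2 E.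
move=> y' Hy' Hyx Hyne.
have [Hy Ey] := Hg y' Hy'.
rewrite -Ey; apply/(Hord _ _ Hy Hm); apply: H => //.
  by apply/(Hord _ _ Hy Hx); rewrite Ey.
by move=> E; apply: Hyne; rewrite -Ey E.
Qed.

Lemma build (I I' : finType) (t : pfun I) (t' : pfun I') f g :
  is_rooted_tree t -> is_rooted_tree t' ->
  (forall x, in_interval t x -> in_interval t' (f x) /\ g (f x) = x) ->
  (forall y, in_interval t' y -> in_interval t (g y) /\ f (g y) = y) ->
  (forall x y, in_interval t x -> in_interval t y -> (nap_le x y <-> nap_le (f x) (f y))) ->
  exists s : I -> I', (forall v, t v = None -> t' (s v) = None) /\
   (forall v, t v <> None -> t' (s v) <> None /\ f (Jf t v) = Jf t' (s v)).
Proof.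
move=> Ht Ht' Hf Hg Hord.
have [r' Hr'] := root_ex Ht'.
have Hex : forall v, exists v', (t v = None -> t' v' = None) /\
   (t v <> None -> t' v' <> None /\ f (Jf t v) = Jf t' v').
  move=> v; case E: (t v) => [a|].
    have HJ := @JI_Jf _ t v (proj1 Ht) (ltac:(by rewrite E)).
    have [v' [Hv' Ev']] := JI_inv (proj1 Ht') (JI_transport Hf Hg Hord HJ).
    by exists v'; split.
  by exists r'; split.
exists (fun v => proj1_sig (constructive_indefinite_description _ (Hex v))).
split=> v; case: constructive_indefinite_description => v' /= [H1 H2] //.
Qed.


Definition relab (I I' : finType) (s : I -> I') (s' : I' -> I) (x : pfun I) : pfun I' :=
  [ffun v' => omap s (x (s' v'))].

Lemma relab_Pr (I I' : finType) (t : pfun I) (t' : pfun I') s s' :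
  cancel s s' -> cancel s' s -> (forall v, t' (s v) = omap s (t v)) ->
  forall x, Pr x t -> Pr (relab s s' x) t'.
Proof.
move=> K K' Hs x [S H]; split=> [v'|a' b'].
  rewrite ffunE; have -> : t' v' = t' (s (s' v')) by rewrite K'.
  rewrite Hs; case: (S (s' v')) => ->; [by left|by right].
rewrite !ffunE; have -> : t' a' = t' (s (s' a')) by rewrite K'.
rewrite Hs.
case Ea: (t (s' a')) => [b0|] //= [<-].
case Ex: (x (s' a')) => //= _.
by rewrite K (H _ _ Ea Ex).
Qed.

Lemma relab_K (I I' : finType) s s' (x : pfun I) :
  cancel s s' -> relab s' s (@relab I I' s s' x) = x.
Proof.
move=> K; apply/ffunP => v; rewrite !ffunE K.
by case: (x v) => //= a; rewrite K.
Qed.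

Lemma relab_le (I I' : finType) (x y : pfun I) (s : I -> I') s' :
  cancel s s' -> cancel s' s ->
  ((forall v, y v = None -> x v = None) <->
   (forall v', relab s s' y v' = None -> relab s s' x v' = None)).
Proof.
move=> K K'; split.
  move=> H v'; rewrite !ffunE.
  by case Ey: (y (s' v')) => //= _; rewrite H.
move=> H v Hy; have := H (s v); rewrite !ffunE K Hy => /(_ erefl).
by case: (x v).
Qed.

Lemma iso_dir2 (I I' : finType) (t : pfun I) (t' : pfun I') :
  is_rooted_tree t -> is_rooted_tree t' -> rooted_tree_iso t t' -> interval_iso t t'.
Proof.
move=> [Ht _] [Ht' _] [s [[s' K K'] Hs]].
have Hs' : forall v', t (s' v') = omap s' (t' v').
  move=> v'; have -> : t' v' = t' (s (s' v')) by rewrite K'.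
  by rewrite Hs; case: (t (s' v')) => //= a; rewrite K.
exists (relab s s'), (relab s' s); split.
- move=> x /(interval_C _ Ht) Hx; split; last exact: relab_K.
  exact/(interval_C _ Ht')/(relab_Pr K K' Hs).
- move=> y /(interval_C _ Ht') Hy; split; last exact: relab_K.
  exact/(interval_C _ Ht)/(relab_Pr K' K Hs').
move=> x y /(interval_C _ Ht) Hx /(interval_C _ Ht) Hy.
have Hx' := relab_Pr K K' Hs Hx; have Hy' := relab_Pr K K' Hs Hy.
rewrite (le_C Ht Hx Hy) (le_C Ht' Hx' Hy').
exact: relab_le.
Qed.

Lemma iso_dir1 (I I' : finType) (t : pfun I) (t' : pfun I') :
  is_rooted_tree t -> is_rooted_tree t' -> interval_iso t t' -> rooted_tree_iso t t'.
Proof.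
move=> Ht Ht' [f [g [Hf Hg Hord]]].
have Hord' : forall x y, in_interval t' x -> in_interval t' y ->
    (nap_le x y <-> nap_le (g x) (g y)).
  move=> x y Hx Hy; have [Hgx Egx] := Hg x Hx; have [Hgy Egy] := Hg y Hy.
  have := Hord _ _ Hgx Hgy; rewrite Egx Egy => H.
  by split; [apply: (proj2 H) | apply: (proj1 H)].
have [s [Hs1 Hs2]] := build Ht Ht' Hf Hg Hord.
have [s' [Hs1' Hs2']] := build Ht' Ht Hg Hf Hord'.
have Ft := proj1 Ht; have Ft' := proj1 Ht'.
have Jin : forall v, in_interval t (Jf t v) by move=> v; apply/(interval_C _ Ft)/Jf_C.
have Jin' : forall v, in_interval t' (Jf t' v) by move=> v; apply/(interval_C _ Ft')/Jf_C.
have K : cancel s s'.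
  move=> v; case E: (t v) => [a|]; last first.
    by apply: (root_uniq Ht) => //; apply: Hs1'; exact: Hs1 E.
  have Hv : t v <> None by rewrite E.
  have [Hsv Ef] := Hs2 v Hv; have [Hssv Eg] := Hs2' (s v) Hsv.
  apply/esym; apply: (Jf_inj Ft Hv Hssv).
  by rewrite -Eg -Ef (Hf _ (Jin v)).2.
have K' : cancel s' s.
  move=> v; case E: (t' v) => [a|]; last first.
    by apply: (root_uniq Ht') => //; apply: Hs1; exact: Hs1' E.
  have Hv : t' v <> None by rewrite E.
  have [Hsv Ef] := Hs2' v Hv; have [Hssv Eg] := Hs2 (s' v) Hsv.
  apply/esym; apply: (Jf_inj Ft' Hv Hssv).
  by rewrite -Eg -Ef (Hg _ (Jin' v)).2.
have Tr : forall v u, t v <> None -> t u <> None -> (anc t v u <-> anc t' (s v) (s u)).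
  move=> v u Hv Hu; have [Hsv Ev] := Hs2 v Hv; have [Hsu Eu] := Hs2 u Hu.
  split => H.
    apply/(Jf_le _ Ft' Hsv); rewrite -Ev -Eu; apply/(Hord _ _ (Jin v) (Jin u)).
    exact/(Jf_le _ Ft Hv).
  apply/(Jf_le _ Ft Hv); apply/(Hord _ _ (Jin v) (Jin u)); rewrite Ev Eu.
  exact/(Jf_le _ Ft' Hsv).
exists s; split; first by exists s'.
move=> v; case E: (t v) => [w|]; last exact: Hs1 E.
have Hv : t v <> None by rewrite E.
have [Hsv _] := Hs2 v Hv.
case Ez: (t' (s v)) => [z|]; last by [].
congr Some.
have Hcommon : t' z <> None -> t (s' z) <> None /\ anc t w (s' z).
  move=> Hz; have Hsz := (Hs2' z Hz).1; split => //.
  have : anc t' (s v) (s (s' z)) by rewrite K'; exact: anc_step.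
  move/(Tr _ _ Hv Hsz) => Hvz.
  have Nvz : v <> s' z.
    move=> Evz; apply: (@no_loop _ t' z Ft'); by rewrite -{1}(K' z) -Evz.
  have [w0 [Ew0 Hw0]] := anc_parent Hvz Nvz.
  by rewrite E in Ew0; case: Ew0 Hw0 => ->.
case Ew: (t w) => [w1|].
  have Hw : t w <> None by rewrite Ew.
  have a1 : anc t' (s v) (s w) by apply/(Tr _ _ Hv Hw); exact: anc_step.
  have nsvw : s v <> s w.
    move=> Evw; have := congr1 s' Evw; rewrite !K => Evw'.
    by apply: (@no_loop _ t v Ft); rewrite E Evw'.
  have [z0 [Ez0 Hz0]] := anc_parent a1 nsvw.
  rewrite Ez in Ez0; case: Ez0 Hz0 => <- Hz0.
  case Etz: (t' z) => [z1|]; last first.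
    have Ezw := anc_root Etz Hz0.
    by case: (Hs2 w Hw) => + _; rewrite Ezw Etz.
  have Hz : t' z <> None by rewrite Etz.
  have [Hsz Hwz] := Hcommon Hz.
  have := (Tr _ _ Hw Hsz).1 Hwz; rewrite K' => Hwz'.
  exact: anc_antisym Ft' Hz0 Hwz'.
case Etz: (t' z) => [z1|]; last exact: root_uniq Ht' Etz (Hs1 w Ew).
have Hz : t' z <> None by rewrite Etz.
have [Hsz Hwz] := Hcommon Hz.
have := anc_root Ew Hwz => Ezw.
by rewrite Ezw Ew in Hsz.
Qed.

Theorem proposition6p6 (I I' : finType) (t : pfun I) (t' : pfun I') :
  is_rooted_tree t -> is_rooted_tree t' ->
  (interval_iso t t' <-> rooted_tree_iso t t').
Proof.
move=> Ht Ht'; split; [exact: iso_dir1 | exact: iso_dir2].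
Qed.
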